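(* Let $d$ be a positive integer, let $a>0$, and let $x$ be a real number with $x>1-\frac{2}{d+1}$ (and $x<1$). Among all degree distributions $\gamma$ with average degree $a$ and maximal degree $d$, the one which maximizes $\gamma(x)$ has the form $\gamma(x)=\gamma_ix^{i-1}+\gamma_{i+1}x^{i}$, where $i=\lfloor a\rfloor$ is the largest integer smaller than $a$.
   Context: A degree distribution is a polynomial $\gamma(x)=\sum_{k\ge2}\gamma_kx^{k-1}$ with $\gamma_k\ge0$ and $\sum_k\gamma_k=1$; its maximal degree is the largest $k$ with $\gamma_k\ne0$, and its average degree $a$ is defined by $1/a=\int_0^1\gamma(x)\,dx$. *)

(* Defs.v *)
From Stdlib Require Import Reals Lra.
From Coquelicot Require Import Coquelicot.
Open Scope R_scope.

(* A degree distribution with maximal degree at most d is represented by its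
   coefficient function g : nat -> R (g k = gamma_k), supported on {2,...,d}. *)
Definition is_degree_distribution (d : nat) (g : nat -> R) : Prop :=
  (forall k, 0 <= g k) /\
  (forall k, (k < 2)%nat \/ (d < k)%nat -> g k = 0) /\
  sum_f_R0 g d = 1.

Definition gamma_eval (d : nat) (g : nat -> R) (x : R) : R :=
  sum_f_R0 (fun k => g k * x ^ (k - 1)) d.

Definition has_average_degree (d : nat) (g : nat -> R) (a : R) : Prop :=
  RInt (fun t => gamma_eval d g t) 0 1 = 1 / a.

(* Main.v *)
Require Import Defs.
From Stdlib Require Import Reals Lra Lia.
From Coquelicot Require Import Coquelicot.
Open Scope R_scope.

Lemma term_int (f : nat -> R) (k : nat) : (k = 0%nat -> f k = 0) ->
  is_RInt (fun t => f k * t ^ (k - 1)) 0 1 (f k / INR k).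
Proof.
  intros Hk. destruct k as [|p].
  - rewrite Hk by reflexivity.
    apply is_RInt_ext with (fun _ => 0). { intros. change (0 = 0 * x ^ (0 - 1)). ring. }
    replace (0 / INR 0) with (scal (1 - 0) 0).
    { exact (@is_RInt_const R_NormedModule 0 1 0). }
    unfold scal; simpl; unfold mult; simpl. unfold Rdiv. ring.
  - replace (f (S p) / INR (S p)) with
      (minus ((fun t => f (S p) / INR (S p) * t ^ (S p)) 1)
             ((fun t => f (S p) / INR (S p) * t ^ (S p)) 0)).
    2: { simpl. rewrite pow1, Rmult_0_l. unfold minus, plus, opp; simpl. ring. }
    apply (@is_RInt_derive R_CompleteNormedModule (fun t => f (S p) / INR (S p) * t ^ S p)).
    + intros t _. auto_derive; auto.
      replace (S p - 1)%nat with p by lia.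
      change (match p with 0%nat => 1 | S _ => INR p + 1 end) with (INR (S p)). field. apply not_0_INR. lia.
    + intros t _.
      apply (ex_derive_continuous (fun t => f (S p) * t ^ (S p - 1))). auto_derive. auto.
Qed.

Lemma sum_int (f : nat -> R) (n : nat) : f 0%nat = 0 ->
  is_RInt (fun t => sum_f_R0 (fun k => f k * t ^ (k - 1)) n) 0 1
          (sum_f_R0 (fun k => f k / INR k) n).
Proof.
  intros H0. induction n as [|n IH].
  - simpl. apply term_int with (k := 0%nat). auto.
  - simpl. apply (is_RInt_plus _ _ _ _ _ _ IH).
    apply term_int. lia.
Qed.

Lemma avg_sum d g a : (g 0%nat = 0) -> has_average_degree d g a ->
  sum_f_R0 (fun k => g k / INR k) d = 1 / a.
Proof.
  intros H0 H. unfold has_average_degree, gamma_eval in H. rewrite <- H.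
  symmetry. apply is_RInt_unique. apply sum_int; auto.
Qed.
Lemma concave_neg (G : nat -> R) (i hi : nat) :
  (1 <= i)%nat -> (S i <= hi)%nat -> G i = 0 -> G (S i) = 0 ->
  (forall n, (1 <= n)%nat -> (S (S n) <= hi)%nat -> G (S (S n)) - 2 * G (S n) + G n < 0) ->
  forall k, (1 <= k)%nat -> (k <= hi)%nat -> k <> i -> k <> S i -> G k < 0.
Proof.
  intros Hi Hhi G0 G1 Hc.
  assert (Up : forall m, (S (S (i + m)) <= hi)%nat ->
            G (S (S (i+m))) - G (S (i+m)) < 0 /\ G (S (S (i+m))) < 0).
  { induction m as [|m IH]; intros Hm.
    - rewrite Nat.add_0_r in *. pose proof (Hc i Hi Hm). split; lra.
    - rewrite Nat.add_succ_r in *. destruct (IH ltac:(lia)) as [H1 H2].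
      pose proof (Hc (S (i+m)) ltac:(lia) Hm). split; lra. }
  assert (Down : forall m k, (k + S m = i)%nat -> (1 <= k)%nat ->
            G (S k) - G k > 0 /\ G k < 0).
  { induction m as [|m IH]; intros k Hk Hk1.
    - assert (E : S k = i) by lia. pose proof (Hc k Hk1 ltac:(lia)) as H.
      rewrite E in H |- *. split; lra.
    - destruct (IH (S k) ltac:(lia) ltac:(lia)) as [H1 H2].
      pose proof (Hc k Hk1 ltac:(lia)). split; lra. }
  intros k Hk1 Hkh Hn1 Hn2.
  destruct (Nat.lt_ge_cases k i) as [Hlt|Hge].
  - apply (Down (i - k - 1)%nat k); lia.
  - assert (E : k = S (S (i + (k - S (S i))))) by lia. rewrite E.
    apply Up. lia.
Qed.

Lemma sum_lin (p q r : nat -> R) (al be : R) (n : nat) :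
  sum_f_R0 (fun k => al * p k + be * q k + r k) n =
  al * sum_f_R0 p n + be * sum_f_R0 q n + sum_f_R0 r n.
Proof. induction n; simpl; [ring| rewrite IHn; ring]. Qed.

Lemma sum_nonpos (c : nat -> R) (n : nat) :
  (forall k, (k <= n)%nat -> c k <= 0) -> sum_f_R0 c n <= 0.
Proof. induction n; intros H; simpl. apply H; lia.
  pose proof (H (S n) ltac:(lia)). pose proof (IHn ltac:(intros; apply H; lia)). lra. Qed.

Lemma sum_neg (c : nat -> R) (n k0 : nat) :
  (forall k, (k <= n)%nat -> c k <= 0) -> (k0 <= n)%nat -> c k0 < 0 -> sum_f_R0 c n < 0.
Proof. induction n; intros H Hk Hc; simpl.
  - replace k0 with 0%nat in Hc by lia. auto.
  - destruct (Nat.eq_dec k0 (S n)) as [->|Hne].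
    + pose proof (sum_nonpos c n ltac:(intros; apply H; lia)). lra.
    + pose proof (H (S n) ltac:(lia)). pose proof (IHn ltac:(intros; apply H; lia) ltac:(lia) Hc). lra.
Qed.

Lemma sum_zero (c : nat -> R) (n : nat) :
  (forall k, c k = 0) -> sum_f_R0 c n = 0.
Proof. intros H; induction n; simpl; rewrite ?IHn, H; ring. Qed.

Lemma sum_delta (i n : nat) (w : nat -> R) :
  sum_f_R0 (fun k => if Nat.eqb k i then w k else 0) n =
  if Nat.leb i n then w i else 0.
Proof.
  induction n as [|n IH].
  - simpl. destruct i; simpl; auto.
  - rewrite tech5, IH. cbv beta. destruct (Nat.eqb_spec (S n) i) as [E|E].
    + subst. rewrite Nat.leb_refl. assert (Nat.leb (S n) n = false) as ->. { apply Nat.leb_gt; lia. } ring.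
    + destruct (Nat.leb_spec i n); destruct (Nat.leb_spec i (S n)); try lia; ring.
Qed.

Lemma decomp (d : nat) (f G : nat -> R) (A B x a : R) :
  f 0%nat = 0 ->
  (forall k, (1 <= k)%nat -> G k = INR k * x ^ (k - 1) - A * INR k - B) ->
  sum_f_R0 f d = 1 -> sum_f_R0 (fun k => f k / INR k) d = 1 / a ->
  gamma_eval d f x = A + B / a + sum_f_R0 (fun k => f k * G k / INR k) d.
Proof.
  intros H0 HG Hs Ha. unfold gamma_eval.
  rewrite (sum_eq _ (fun k => A * f k + B * (f k / INR k) + f k * G k / INR k)).
  - rewrite sum_lin, Hs, Ha. unfold Rdiv. ring.
  - intros k _. destruct k as [|p].
    + rewrite H0. unfold Rdiv. ring.
    + rewrite HG by lia. field. apply not_0_INR. lia.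
Qed.

Theorem theorem3 (d : nat) (a x : R) (g : nat -> R) (i : nat) :
  (1 <= d)%nat ->
  0 < a ->
  1 - 2 / (INR d + 1) < x -> x < 1 ->
  INR i <= a < INR i + 1 ->
  is_degree_distribution d g ->
  has_average_degree d g a ->
  (forall h : nat -> R,
     is_degree_distribution d h -> has_average_degree d h a ->
     gamma_eval d h x <= gamma_eval d g x) ->
  forall k : nat, g k <> 0 -> k = i \/ k = S i.
Proof.
  intros Hd Ha Hx Hx1 [Hia Hai] Hg Havg Hmax k0 Hk0.
  destruct Hg as [Hpos [Hsupp Hsum]].
  assert (Hg0 : g 0%nat = 0) by (apply Hsupp; lia).
  pose proof (avg_sum d g a Hg0 Havg) as Hav.
  set (D := INR d).
  assert (HD1 : 1 <= D) by (unfold D; apply (le_INR 1); lia).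
  assert (HxD : (D + 1) * x > D - 1).
  { assert (E : 1 - 2 / (D + 1) = (D - 1) / (D + 1)) by (field; lra).
    fold D in Hx. rewrite E in Hx.
    apply Rmult_lt_compat_l with (r := D + 1) in Hx; [|lra].
    replace ((D + 1) * ((D - 1) / (D + 1))) with (D - 1) in Hx by (field; lra). lra. }
  assert (Hx0 : 0 < x) by nra.
  assert (Ha2 : 2 <= a).
  { assert (sum_f_R0 (fun k => g k / INR k) d <= sum_f_R0 (fun k => g k * / 2) d).
    { apply sum_Rle. intros k Hk. destruct (Nat.lt_ge_cases k 2).
      - rewrite Hsupp by lia. unfold Rdiv. lra.
      - assert (2 <= INR k) by (apply (le_INR 2); lia).
        unfold Rdiv. apply Rmult_le_compat_l; [apply Hpos|].
        apply Rinv_le_contravar; lra. }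
    rewrite <- scal_sum, Hsum in H. rewrite Hav in H.
    destruct (Rlt_or_le a 2) as [Hl|]; auto.
    assert (/ 2 < / a) by (apply Rinv_lt_contravar; nra). unfold Rdiv in H. lra. }
  assert (HaD : a <= D).
  { assert (sum_f_R0 (fun k => g k * / D) d <= sum_f_R0 (fun k => g k / INR k) d).
    { apply sum_Rle. intros k Hk. destruct (Nat.lt_ge_cases k 2).
      - rewrite Hsupp by lia. unfold Rdiv. lra.
      - assert (2 <= INR k) by (apply (le_INR 2); lia).
        assert (INR k <= D) by (apply le_INR; lia).
        unfold Rdiv. apply Rmult_le_compat_l; [apply Hpos|].
        apply Rinv_le_contravar; lra. }
    rewrite <- scal_sum, Hsum in H. rewrite Hav in H.
    destruct (Rlt_or_le D a) as [Hl|]; auto.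
    assert (/ a < / D) by (apply Rinv_lt_contravar; nra). unfold Rdiv in H. lra. }
  assert (Hi2 : (2 <= i)%nat).
  { destruct (Nat.lt_ge_cases i 2); auto. assert (INR i <= 1) by (apply (le_INR i 1); lia). lra. }
  assert (HiD : (i <= d)%nat) by (apply INR_le; fold D; lra).
  assert (Hcase : (d < S i)%nat -> a = INR i).
  { intros. assert (i = d) by lia. subst i. unfold D in *. lra. }
  assert (HIi : 2 <= INR i) by (apply (le_INR 2); lia).
  set (A := INR (S i) * x ^ i - INR i * x ^ (i - 1)).
  set (B := INR i * x ^ (i - 1) - A * INR i).
  set (G := fun k => INR k * x ^ (k - 1) - A * INR k - B).
  assert (HGi : G i = 0) by (unfold G, B; ring).
  assert (HGSi : G (S i) = 0).
  { unfold G, B, A. replace (S i - 1)%nat with i by lia. rewrite S_INR. ring. }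
  assert (Hconc : forall n, (1 <= n)%nat -> (S (S n) <= S d)%nat ->
            G (S (S n)) - 2 * G (S n) + G n < 0).
  { intros n Hn1 Hn2. destruct n as [|p]; [lia|].
    assert (HP : INR p + 2 <= D).
    { assert (HP0 : INR (p + 2) <= D) by (apply le_INR; lia). rewrite plus_INR in HP0. simpl (INR 2) in HP0. lra. }
    assert (Hy : 0 < x ^ p) by (apply pow_lt; lra).
    replace (G (S (S (S p))) - 2 * G (S (S p)) + G (S p)) with
      (x ^ p * ((x - 1) * ((INR p + 3) * x - (INR p + 1)))).
    2: { unfold G. replace (S (S (S p)) - 1)%nat with (S (S p)) by lia.
         replace (S (S p) - 1)%nat with (S p) by lia.
         replace (S p - 1)%nat with p by lia. rewrite !S_INR. simpl pow. ring. }
    assert ((x - 1) * ((INR p + 3) * x - (INR p + 1)) < 0).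
    { assert (0 <= (D - INR p - 2) * (1 - x)) by (apply Rmult_le_pos; lra). nra. }
    nra. }
  assert (HGneg := concave_neg G i (S d) ltac:(lia) ltac:(lia) HGi HGSi Hconc).
  assert (HGle : forall k, (1 <= k)%nat -> (k <= S d)%nat -> G k <= 0).
  { intros k H1 H2. destruct (Nat.eq_dec k i) as [->|]; [lra|].
    destruct (Nat.eq_dec k (S i)) as [->|]; [lra|]. left; apply HGneg; auto. }
  assert (HGdef : forall k, (1 <= k)%nat -> G k = INR k * x ^ (k - 1) - A * INR k - B)
    by (intros; reflexivity).
  assert (Hvg : gamma_eval d g x = A + B / a + sum_f_R0 (fun k => g k * G k / INR k) d)
    by (apply decomp; auto).
  destruct (Nat.eq_dec k0 i) as [|Hn1]; [left; auto|].
  destruct (Nat.eq_dec k0 (S i)) as [|Hn2]; [right; auto|].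
  exfalso.
  assert (Hk0r : (2 <= k0)%nat /\ (k0 <= d)%nat).
  { destruct (Nat.lt_ge_cases k0 2); [exfalso; apply Hk0, Hsupp; lia|].
    destruct (Nat.lt_ge_cases d k0); [exfalso; apply Hk0, Hsupp; lia|]. lia. }
  assert (Hneg : sum_f_R0 (fun k => g k * G k / INR k) d < 0).
  { apply sum_neg with k0.
    - intros k Hk. destruct (Nat.lt_ge_cases k 1).
      + replace k with 0%nat by lia. rewrite Hg0. unfold Rdiv. lra.
      + assert (0 < INR k) by (apply lt_0_INR; lia).
        assert (G k <= 0) by (apply HGle; lia).
        pose proof (Hpos k). unfold Rdiv.
        assert (0 < / INR k) by (apply Rinv_0_lt_compat; auto).
        assert (g k * G k <= 0) by nra. nra.
    - lia.
    - assert (0 < INR k0) by (apply lt_0_INR; lia).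
      assert (G k0 < 0) by (apply HGneg; lia).
      assert (0 < g k0) by (pose proof (Hpos k0); lra).
      unfold Rdiv. assert (0 < / INR k0) by (apply Rinv_0_lt_compat; auto).
      assert (g k0 * G k0 < 0) by nra. nra. }
  set (lam := INR i * (INR i + 1 - a) / a).
  assert (Hlama : lam * a = INR i * (INR i + 1 - a)) by (unfold lam; field; lra).
  assert (Hlam0 : 0 <= lam).
  { unfold lam. unfold Rdiv. apply Rmult_le_pos; [apply Rmult_le_pos; lra|].
    left; apply Rinv_0_lt_compat; lra. }
  assert (Hlam1 : lam <= 1) by nra.
  assert (HlamD : (d < S i)%nat -> lam = 1).
  { intros H. pose proof (Hcase H). assert (lam * a = 1 * a) by nra.
    apply Rmult_eq_reg_r in H1; lra. }
  set (h := fun k => (if Nat.eqb k i then lam else 0) + (if Nat.eqb k (S i) then 1 - lam else 0)).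
  assert (Hh0 : h 0%nat = 0).
  { unfold h. destruct (Nat.eqb_spec 0 i); destruct (Nat.eqb_spec 0 (S i)); try lia. ring. }
  assert (Hhsum : sum_f_R0 h d = 1).
  { unfold h. rewrite plus_sum.
    rewrite (sum_delta i d (fun _ => lam)), (sum_delta (S i) d (fun _ => 1 - lam)).
    destruct (Nat.leb_spec i d); [|lia].
    destruct (Nat.leb_spec (S i) d).
    - ring.
    - rewrite HlamD by lia. ring. }
  assert (Hhav : sum_f_R0 (fun k => h k / INR k) d = 1 / a).
  { rewrite (sum_eq _ (fun k => (if Nat.eqb k i then lam / INR k else 0)
                             + (if Nat.eqb k (S i) then (1 - lam) / INR k else 0))).
    2: { intros k _. unfold h. destruct (Nat.eqb k i); destruct (Nat.eqb k (S i)); unfold Rdiv; ring. }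
    rewrite plus_sum.
    rewrite (sum_delta i d (fun k => lam / INR k)), (sum_delta (S i) d (fun k => (1 - lam) / INR k)).
    destruct (Nat.leb_spec i d); [|lia].
    rewrite S_INR.
    destruct (Nat.leb_spec (S i) d).
    - unfold lam. field. lra.
    - pose proof (Hcase ltac:(lia)). rewrite HlamD by lia. rewrite H1. field. lra. }
  assert (Hhdd : is_degree_distribution d h).
  { split; [|split].
    - intros k. unfold h. destruct (Nat.eqb k i); destruct (Nat.eqb k (S i)); lra.
    - intros k Hk. unfold h. destruct (Nat.eqb_spec k i); [lia|].
      destruct (Nat.eqb_spec k (S i)); [|ring].
      rewrite HlamD by lia. ring.
    - exact Hhsum. }
  assert (Hhavg : has_average_degree d h a).
  { unfold has_average_degree. rewrite <- Hhav. apply is_RInt_unique.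
    unfold gamma_eval. apply sum_int. exact Hh0. }
  pose proof (Hmax h Hhdd Hhavg) as Hle.
  assert (Hvh : gamma_eval d h x = A + B / a + sum_f_R0 (fun k => h k * G k / INR k) d)
    by (apply decomp; auto).
  rewrite sum_zero in Hvh.
  2: { intros k. unfold h. destruct (Nat.eqb_spec k i); destruct (Nat.eqb_spec k (S i)); try lia; try subst k.
       - rewrite HGi. unfold Rdiv. ring.
       - rewrite HGSi. unfold Rdiv. ring.
       - unfold Rdiv. ring. }
  lra.
Qed.
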